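(* Let $G$ be a connected graph with maximum degree $\Delta$ and minimum degree $\delta\geq 2$. If $\Delta-\delta\leq (2\delta-1)^{2}$, then $GA(G)>ABC(G)$.
   Context: All graphs are finite, simple and undirected. For a graph $G$ with vertex degrees $d_i$ (degree of vertex $v_i$), the first geometric-arithmetic index is $GA(G)=\sum_{v_iv_j\in E(G)}\frac{2\sqrt{d_id_j}}{d_i+d_j}$ and the atom-bond connectivity index is $ABC(G)=\sum_{v_iv_j\in E(G)}\sqrt{\frac{d_i+d_j-2}{d_id_j}}$. *)

(* Defs.v *)
From mathcomp Require Import all_boot all_order all_algebra.
Set Implicit Arguments. Unset Strict Implicit. Unset Printing Implicit Defensive.
Import Order.TTheory GRing.Theory Num.Theory.

Definition simple_graph (T : finType) (e : rel T) : Prop :=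
  symmetric e /\ irreflexive e.

Definition deg (T : finType) (e : rel T) (v : T) : nat := #|[set w | e v w]|.

Definition connected_graph (T : finType) (e : rel T) : Prop :=
  forall x y : T, connect e x y.

Definition is_min_deg (T : finType) (e : rel T) (d : nat) : Prop :=
  (exists v, deg e v = d) /\ (forall v, d <= deg e v)%N.
Definition is_max_deg (T : finType) (e : rel T) (d : nat) : Prop :=
  (exists v, deg e v = d) /\ (forall v, deg e v <= d)%N.

Local Open Scope ring_scope.

(* Sum over the edges of G of f(d_u, d_v), for symmetric f: each unordered edge
   {u,v} appears twice among ordered adjacent pairs (u,v), hence the factor 1/2. *)
Definition edge_sum (R : rcfType) (T : finType) (e : rel T)
  (f : R -> R -> R) : R :=
  2^-1 * \sum_(u : T) \sum_(v : T | e u v) f (deg e u)%:R (deg e v)%:R.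

Definition GA_term (R : rcfType) (a b : R) : R := 2 * Num.sqrt (a * b) / (a + b).
Definition ABC_term (R : rcfType) (a b : R) : R := Num.sqrt ((a + b - 2) / (a * b)).

Definition GA_index (R : rcfType) (T : finType) (e : rel T) : R :=
  edge_sum e (@GA_term R).
Definition ABC_index (R : rcfType) (T : finType) (e : rel T) : R :=
  edge_sum e (@ABC_term R).

(* Main.v *)
From Stdlib Require Import Lia ZArith.
Require Import Defs.
From mathcomp Require Import all_boot all_order all_algebra zify ring lra.
Import Order.TTheory GRing.Theory Num.Theory.
Local Open Scope ring_scope.

Section KZ.
Local Open Scope Z_scope.
Lemma kZ (a d : Z) : 2 <= a -> 0 <= d -> d <= (2*a-1)*(2*a-1) ->
  (2*a+d)*(2*a+d)*(2*a+d) < 4*(a*a)*((a+d)*(a+d)) + 2 * ((2*a+d)*(2*a+d)).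
Proof. intros. nia. Qed.
End KZ.

Lemma key_nat0 (a d : nat) : (2 <= a)%N -> (d <= (2*a-1)^2)%N ->
  ((2*a+d)^2*(2*a+d) < 4*a^2*(a+d)^2 + 2 * (2*a+d)^2)%N.
Proof. move=> h1 h3. rewrite -!mulnn. rewrite -mulnn in h3.
have := @kZ (Z.of_nat a) (Z.of_nat d). lia. Qed.

Lemma term_lt (R : rcfType) (x y : R) : 0 < x -> 0 < y -> 2 <= x + y ->
  (x + y) ^+ 2 * (x + y) < 4 * x ^+ 2 * y ^+ 2 + 2 * (x + y) ^+ 2 ->
  ABC_term x y < GA_term x y.
Proof.
move=> hx hy hs H0; rewrite /ABC_term /GA_term.
have H : (x + y - 2) * (x + y) ^+ 2 < 4 * (x * y) ^+ 2.
  by rewrite exprMn; lra.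
have hp : 0 < x * y by apply: mulr_gt0.
have hs0 : 0 < x + y by lra.
set u := Num.sqrt _.
have hu : 0 <= u := sqrtr_ge0 _.
have hu2 : u ^+ 2 = (x + y - 2) / (x * y).
  by rewrite sqr_sqrtr // divr_ge0 ?subr_ge0 // ltW.
set w := Num.sqrt (x * y).
have hw : 0 <= w := sqrtr_ge0 _.
have hw2 : w ^+ 2 = x * y by rewrite sqr_sqrtr // ltW.
set v := 2 * w / (x + y).
have hv : 0 <= v by rewrite divr_ge0 ?mulr_ge0 // ltW.
have hv2 : v ^+ 2 = 4 * (x * y) / (x + y) ^+ 2.
  by rewrite /v expr_div_n exprMn hw2; congr (_ * _ / _); ring.
have : u ^+ 2 < v ^+ 2.
  rewrite hu2 hv2 ltr_pdivrMr // mulrAC ltr_pdivlMr ?exprn_gt0 //.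
  by move: H; rewrite [(x * y) ^+ 2]expr2 mulrA.
move=> h; nra.
Qed.

Lemma edge_lt (R : rcfType) (a b dl : nat) : (2 <= dl)%N -> (dl <= a)%N -> (dl <= b)%N ->
  (b - a <= (2 * dl - 1) ^ 2)%N -> (a - b <= (2 * dl - 1) ^ 2)%N ->
  ABC_term (a%:R : R) b%:R < GA_term (a%:R : R) b%:R.
Proof.
wlog hab : a b / (a <= b)%N.
  move=> W h1 h2 h3 h4 h5; case: (leqP a b) => hab; first exact: W.
  have : ABC_term (b%:R : R) a%:R < GA_term (b%:R : R) a%:R.
    by apply: W => //; apply: ltnW.
  by rewrite /ABC_term /GA_term [_ + a%:R]addrC [_ * a%:R]mulrC.
move=> h1 h2 h3 h4 _.
have ha : (2 <= a)%N by lia.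
have hd : (b - a <= (2 * a - 1) ^ 2)%N.
  apply: (leq_trans h4); rewrite leq_exp2r //; lia.
have K := @key_nat0 _ _ ha hd.
have Hb : b = (a + (b - a))%N by lia.
apply: term_lt.
- by rewrite ltr0n; lia.
- by rewrite ltr0n; lia.
- by rewrite -natrD ler_nat; lia.
move: K; rewrite -(ltr_nat R).
have -> : (2 * a + (b - a) = a + b)%N by lia.
rewrite -Hb.
by rewrite !(natrD, natrM, natrX).
Qed.

Theorem theorem3p4 (R : rcfType) (T : finType) (e : rel T)
  (Delta delta : nat) :
  simple_graph e -> connected_graph e ->
  is_max_deg e Delta -> is_min_deg e delta ->
  (2 <= delta)%N ->
  (Delta - delta <= (2 * delta - 1) ^ 2)%N ->
  ABC_index R e < GA_index R e.
Proof.
move=> _ _ [_ hM] [[u0 hu0] hm] h2 hK.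
rewrite /ABC_index /GA_index /edge_sum.
rewrite ltr_pM2l ?invr_gt0 ?ltr0n //.
have hE : forall u v, e u v -> ABC_term ((deg e u)%:R : R) (deg e v)%:R
    < GA_term (deg e u)%:R (deg e v)%:R.
  move=> u v _; apply: (@edge_lt R _ _ delta) => //.
  - by apply: (leq_trans _ (hK)); have := hM v; have := hm u; lia.
  - by apply: (leq_trans _ (hK)); have := hM u; have := hm v; lia.
rewrite (bigD1 u0) //= [X in _ < X](bigD1 u0) //=.
apply: ltr_leD.
  apply: ltr_sum; last by move=> v; apply: hE.
  have : (0 < deg e u0)%N by lia.
  rewrite /deg card_gt0 => /set0Pn [v]; rewrite inE => hv.
  by apply/hasP; exists v => //; rewrite mem_index_enum.
apply: ler_sum => u _; apply: ler_sum => v hv; exact: ltW (hE u v hv).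
Qed.
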